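(* Let $n\ge1$, identify $\mathbb{R}^{n+1}=\mathbb{R}^n\times\mathbb{R}$, let $R>0$, let $K\subset\mathbb{R}^{n+1}$ be the closed ball of radius $R$ centered at the origin, and let $f\colon\mathbb{R}^n\to(0,\infty)$ be continuous with $|x|^2+f(x)^2>R^2$ for all $x\in\mathbb{R}^n$ (so that $K$ is disjoint from the epigraph $L=\{(x,y)\mid f(x)\le y\}$). Then for every $x\in\mathbb{R}^n$ there is exactly one $y\in\mathbb{R}$ such that $d((x,y),K)=d((x,y),L)$.
   Context: $d(p,A)=\inf\{|p-q|\mid q\in A\}$ (Euclidean distance). *)

(* Defs.v *)
From HB Require Import structures.
From mathcomp Require Import all_boot all_order all_algebra.
From mathcomp Require Import all_classical all_reals all_analysis.
Set Implicit Arguments. Unset Strict Implicit. Unset Printing Implicit Defensive.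
Import Order.TTheory GRing.Theory Num.Theory.
Local Open Scope classical_set_scope.
Local Open Scope ring_scope.

Definition sqnorm (R : realType) (n : nat) (x : 'rV[R]_n) : R :=
  \sum_(i < n) x ord0 i ^+ 2.

Definition edist (R : realType) (n : nat) (p q : 'rV[R]_n * R) : R :=
  Num.sqrt (sqnorm (p.1 - q.1) + (p.2 - q.2) ^+ 2).

Definition dist_set (R : realType) (n : nat) (p : 'rV[R]_n * R)
  (A : set ('rV[R]_n * R)) : R :=
  inf [set d | exists2 q, A q & d = edist p q].

Definition cball0 (R : realType) (n : nat) (r : R) : set ('rV[R]_n * R) :=
  [set p | edist p (0, 0) <= r].

Definition epigraph (R : realType) (n : nat) (f : 'rV[R]_n -> R)
  : set ('rV[R]_n * R) :=
  [set p | f p.1 <= p.2].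

(* Main.v *)
Require Import Defs.
From HB Require Import structures.
From mathcomp Require Import all_boot all_order all_algebra.
From mathcomp Require Import all_classical all_reals all_analysis.
From mathcomp Require Import ring lra.
Import Order.TTheory GRing.Theory Num.Theory numFieldNormedType.Exports.
Set Implicit Arguments. Unset Strict Implicit. Unset Printing Implicit Defensive.
Local Open Scope classical_set_scope.
Local Open Scope ring_scope.

Section Aux.
Variable R : realType.

Lemma sqrt_leB (A B : R) : 0 <= B -> A <= B ^+ 2 -> Num.sqrt A <= B.
Proof. by move=> B0 AB; rewrite -(ger0_norm B0) -sqrtr_sqr ler_sqrt ?sqr_ge0. Qed.

Lemma sqrt_geB (A B : R) : 0 <= B -> B ^+ 2 <= A -> B <= Num.sqrt A.
Proof. by move=> B0 AB; rewrite -(ger0_norm B0) -sqrtr_sqr ler_sqrt // (le_trans _ AB) ?sqr_ge0. Qed.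

Lemma cs_step (S A B a b : R) : 0 <= A -> 0 <= B -> S ^+ 2 <= A * B ->
  (a * b + S) ^+ 2 <= (a ^+ 2 + A) * (b ^+ 2 + B).
Proof.
move=> A0 B0 SAB.
suff: 2 * a * b * S <= a ^+ 2 * B + b ^+ 2 * A by nra.
have [Az|Ap] := eqVneq A 0.
  have S0 : S = 0 by apply/eqP; rewrite -sqrf_eq0 eq_le sqr_ge0 andbT; move: SAB; rewrite Az mul0r.
  by rewrite Az S0; nra.
have Ap' : 0 < A by rewrite lt_def Ap A0.
have : 0 <= A * (a ^+ 2 * B + b ^+ 2 * A - 2 * a * b * S).
  have -> : A * (a ^+ 2 * B + b ^+ 2 * A - 2 * a * b * S) = (b * A - a * S) ^+ 2 + a ^+ 2 * (A * B - S ^+ 2) by ring.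
  by apply: addr_ge0; [exact: sqr_ge0 | apply: mulr_ge0; [exact: sqr_ge0| lra]].
rewrite pmulr_rge0 //; lra.
Qed.

Lemma cs_seq (I : Type) (s : seq I) (u v : I -> R) :
  (\sum_(i <- s) u i * v i) ^+ 2 <= (\sum_(i <- s) u i ^+ 2) * (\sum_(i <- s) v i ^+ 2).
Proof.
elim: s => [|i s IH]; first by rewrite !big_nil; lra.
rewrite !big_cons; apply: cs_step => //; apply: sumr_ge0 => j _; exact: sqr_ge0.
Qed.

Lemma sum_sqrB (I : Type) (s : seq I) (u v : I -> R) :
  \sum_(i <- s) (u i - v i) ^+ 2 = \sum_(i <- s) u i ^+ 2 - 2 * \sum_(i <- s) u i * v i + \sum_(i <- s) v i ^+ 2.
Proof. elim: s => [|i s IH]; first by rewrite !big_nil; ring. rewrite !big_cons IH; ring. Qed.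

Lemma sum_sqrZ (I : Type) (s : seq I) (u : I -> R) (c : R) :
  \sum_(i <- s) (c * u i) ^+ 2 = c ^+ 2 * \sum_(i <- s) u i ^+ 2.
Proof. elim: s => [|i s IH]; first by rewrite !big_nil; ring. rewrite !big_cons IH; ring. Qed.

Lemma sum_sqr_ge0 (I : Type) (s : seq I) (u : I -> R) : 0 <= \sum_(i <- s) u i ^+ 2.
Proof. apply: sumr_ge0 => i _; exact: sqr_ge0. Qed.


Variable n : nat.
Implicit Types (x z : 'rV[R]_n) (p q : 'rV[R]_n * R) (A : set ('rV[R]_n * R)).

Definition dotv x z := \sum_(i < n) x ord0 i * z ord0 i.

Lemma sqnorm_ge0 x : 0 <= sqnorm x.
Proof. exact: sum_sqr_ge0. Qed.

Lemma sqnormB x z : sqnorm (x - z) = sqnorm x - 2 * dotv x z + sqnorm z.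
Proof.
rewrite /sqnorm /dotv -sum_sqrB; apply: eq_bigr => i _; by rewrite !mxE.
Qed.

Lemma sqnormZ x c : sqnorm (c *: x) = c ^+ 2 * sqnorm x.
Proof.
rewrite /sqnorm -sum_sqrZ; apply: eq_bigr => i _; by rewrite !mxE.
Qed.

Lemma sqnorm0 : sqnorm (0 : 'rV[R]_n) = 0.
Proof. by rewrite -(scale0r 0) sqnormZ expr0n /= mul0r. Qed.

Lemma cs_full x z y w : (dotv x z + y * w) ^+ 2 <= (sqnorm x + y ^+ 2) * (sqnorm z + w ^+ 2).
Proof.
rewrite addrC (addrC (sqnorm x)) (addrC (sqnorm z)).
apply: cs_step; [exact: sqnorm_ge0|exact: sqnorm_ge0|exact: cs_seq].
Qed.

Lemma edist_ge0 p q : (0:R) <= Defs.edist p q.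
Proof. exact: sqrtr_ge0. Qed.

Lemma edist_sqr p q : Defs.edist p q ^+ 2 = sqnorm (p.1 - q.1) + (p.2 - q.2) ^+ 2.
Proof. by rewrite sqr_sqrtr // addr_ge0 ?sqnorm_ge0 ?sqr_ge0. Qed.

Lemma edist_tri p q : Defs.edist p (0, 0) - Defs.edist q (0, 0) <= Defs.edist p q.
Proof.
move: p q => [x y] [z w].
have P0 := edist_ge0 (x, y) (0, 0); have Q0 := edist_ge0 (z, w) (0, 0).
have D0 := edist_ge0 (x, y) (z, w).
have P2 := edist_sqr (x, y) (0, 0); have Q2 := edist_sqr (z, w) (0, 0).
have D2 := edist_sqr (x, y) (z, w).
rewrite /= !subr0 in P2 Q2; rewrite /= sqnormB in D2.
have CS := cs_full x z y w.
rewrite -P2 -Q2 -exprMn in CS.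
have CS' : dotv x z + y * w <= Defs.edist (x, y) (0, 0) * Defs.edist (z, w) (0, 0).
  have PQ0 := mulr_ge0 P0 Q0; move: CS; set S := dotv x z + y * w; set PQ := _ * _.
  move=> CS; rewrite leNgt; apply/negP => lt; move: CS; rewrite leNgt; apply/negP/negPn.
  rewrite ltr_pXn2r // nnegrE //; exact: (le_trans PQ0 (ltW lt)).
have [le|lt] := leP (Defs.edist (x, y) (0, 0)) (Defs.edist (z, w) (0, 0)); first lra.
rewrite -(ler_pXn2r (n:=2)) ?nnegrE //; last lra.
nra.
Qed.

Lemma edist_ge2 p q : `|p.2 - q.2| <= Defs.edist p q.
Proof.
by rewrite -sqrtr_sqr ler_sqrt ?addr_ge0 ?sqnorm_ge0 ?sqr_ge0 // lerDr sqnorm_ge0.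
Qed.

Lemma edist_lip x y y' q : Defs.edist (x, y) q <= Defs.edist (x, y') q + `|y - y'|.
Proof.
have D0 := edist_ge0 (x, y') q; have D2 := edist_sqr (x, y') q.
have H := edist_ge2 (x, y') q; rewrite /= in H D2.
apply: sqrt_leB; first by rewrite addr_ge0.
rewrite /=.
have : (q.2 - y') * (y' - y) <= Defs.edist (x, y') q * `|y - y'|.
  apply: le_trans (ler_norm _) _; rewrite normrM distrC (distrC y).
  by apply: ler_wpM2r.
have N2 : `|y - y'| ^+ 2 = (y - y') ^+ 2 by rewrite real_normK // num_real.
move: D2 N2; set s := sqnorm _; set E := Defs.edist _ _; set N := `|_|; nra.
Qed.

Lemma dset_lb p A : has_lbound [set d | exists2 q, A q & d = Defs.edist p q].
Proof. by exists 0 => d [q _ ->]; exact: edist_ge0. Qed.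

Lemma ds_le p A q : A q -> dist_set p A <= Defs.edist p q.
Proof. by move=> Aq; apply: (ge_inf (dset_lb p A)); exists q. Qed.

Lemma ds_ge p A c : A !=set0 -> (forall q, A q -> c <= Defs.edist p q) -> c <= dist_set p A.
Proof.
move=> [q0 Aq0] H; apply: lb_le_inf; first by exists (Defs.edist p q0), q0.
by move=> d [q Aq ->]; exact: H.
Qed.

Lemma ds_ge0 p A : A !=set0 -> 0 <= dist_set p A.
Proof. by move=> A0; apply: ds_ge => // q _; exact: edist_ge0. Qed.

Lemma ds_lip x y y' A : A !=set0 -> dist_set (x, y) A <= dist_set (x, y') A + `|y - y'|.
Proof.
move=> A0; rewrite -lerBlDr; apply: ds_ge => // q Aq.
rewrite lerBlDr; exact: le_trans (ds_le (x, y) Aq) (edist_lip x y y' q).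
Qed.
End Aux.

Section Main.
Variables (R : realType) (n : nat) (r : R) (f : 'rV[R]_n -> R) (x : 'rV[R]_n).
Hypotheses (r0 : 0 < r) (fc : continuous f) (fpos : forall z, 0 < f z)
  (fK : forall z, r ^+ 2 < sqnorm z + f z ^+ 2).

Let h y := dist_set (x, y) (epigraph f).
Let g y := dist_set (x, y) (cball0 r).
Let P y := Num.sqrt (sqnorm x + y ^+ 2).

Lemma L_ne : epigraph f !=set0.
Proof. by exists (x, f x); rewrite /epigraph /=. Qed.

Lemma edist_self (p : 'rV[R]_n * R) : Defs.edist p p = 0.
Proof. by rewrite /Defs.edist !subrr sqnorm0 expr0n /= addr0 sqrtr0. Qed.

Lemma K_ne : @cball0 R n r !=set0.
Proof. by exists (0, 0); rewrite /cball0 /= edist_self ltW. Qed.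

Lemma P_ge0 y : 0 <= P y.
Proof. exact: sqrtr_ge0. Qed.

Lemma P_sqr y : P y ^+ 2 = sqnorm x + y ^+ 2.
Proof. by rewrite sqr_sqrtr // addr_ge0 ?sqnorm_ge0 ?sqr_ge0. Qed.

Lemma g_in y : P y <= r -> g y = 0.
Proof.
move=> Pr; apply/le_anti/andP; split; last exact: (ds_ge0 _ K_ne).
have -> : 0 = Defs.edist (x, y) (x, y) by rewrite edist_self.
apply: ds_le; rewrite /cball0 /= /Defs.edist /= !subr0; exact: Pr.
Qed.

Lemma g_out y : r < P y -> g y = P y - r.
Proof.
move=> rP; have P0 : 0 < P y by apply: lt_trans rP.
have P2 := P_sqr y.
apply/eqP; rewrite eq_le; apply/andP; split; last first.
  apply: ds_ge; first exact: K_ne.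
  move=> q Kq; have := edist_tri (x, y) q; rewrite /cball0 /= in Kq.
  have -> : Defs.edist (x, y) (0, 0) = P y by rewrite /Defs.edist /= !subr0.
  lra.
set k := r / P y.
apply: (le_trans (ds_le (q:=(k *: x, k * y)) _ _)).
  rewrite /cball0 /= /Defs.edist /= !subr0 [(k * y) ^+ 2]exprMn sqnormZ -mulrDr.
  apply: sqrt_leB; first exact: ltW.
  rewrite -P2 -exprMn /k divfK //; last exact: lt0r_neq0.

rewrite /Defs.edist /=.
have -> : x - k *: x = (1 - k) *: x by rewrite scalerBl scale1r.
have -> : y - k * y = (1 - k) * y by ring.
rewrite [((1 - k) * y) ^+ 2]exprMn sqnormZ -mulrDr; apply: sqrt_leB; first lra.
rewrite -P2 -exprMn.
suff -> : (1 - k) * P y = P y - r by [].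
rewrite /k mulrBl mul1r divfK //; exact: lt0r_neq0.
Qed.

Lemma g_ge0 y : 0 <= g y.
Proof. apply: ds_ge0; exact: K_ne. Qed.

Lemma h_ge0 y : 0 <= h y.
Proof. apply: ds_ge0; exact: L_ne. Qed.

Lemma h_zero y : f x <= y -> h y = 0.
Proof.
move=> fy; apply/le_anti/andP; split; last exact: h_ge0.
rewrite -(edist_self (x, y)); exact: ds_le.
Qed.

Lemma h_mono y1 y2 : y1 <= y2 -> h y2 <= h y1.
Proof.
move=> le12; apply: ds_ge; first exact: L_ne.
move=> [z w] Lq; apply: (le_trans (ds_le (q:=(z, w + (y2 - y1))) _ _)).
  rewrite /epigraph /= in Lq *; lra.
rewrite /Defs.edist /=.
by have -> : y2 - (w + (y2 - y1)) = y1 - w by ring.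
Qed.

Lemma h_lower y : y <= 0 -> - y <= h y.
Proof.
move=> y0; apply: ds_ge; first exact: L_ne.
move=> [z w] Lq; rewrite /epigraph /= in Lq.
have := edist_ge2 (x, y) (z, w); rewrite /= distrC.
have := fpos z; have := ler_norm (w - y); lra.
Qed.

Lemma key y1 y3 : y1 < y3 -> y1 + y3 <= 0 ->
  h y3 ^+ 2 + (y1 ^+ 2 - y3 ^+ 2) <= h y1 ^+ 2.
Proof.
move=> lt13 s13.
have X0 : 0 <= h y3 ^+ 2 + (y1 ^+ 2 - y3 ^+ 2).
  apply: addr_ge0; first exact: sqr_ge0. nra.
have : Num.sqrt (h y3 ^+ 2 + (y1 ^+ 2 - y3 ^+ 2)) <= h y1.
  apply: ds_ge; first exact: L_ne.
  move=> [z w] Lq; rewrite /epigraph /= in Lq.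
  have wp : 0 < w by apply: lt_le_trans (fpos z) Lq.
  have h3 : h y3 <= Defs.edist (x, y3) (z, w) by apply: ds_le.
  have E3 := edist_sqr (x, y3) (z, w); have E1 := edist_sqr (x, y1) (z, w).
  rewrite /= in E3 E1.
  apply: sqrt_leB; first exact: edist_ge0.
  have := h_ge0 y3.
  move: E1 E3 h3; set s := sqnorm _; set e1 := Defs.edist _ _; set e3 := Defs.edist _ _.
  nra.
move=> H; rewrite -(sqr_sqrtr X0) ler_pXn2r ?nnegrE ?sqrtr_ge0 ?h_ge0 //.
Qed.

Lemma h_pos y : y < f x -> 0 < h y.
Proof.
move=> yf; set eps := (f x - y) / 2.
have e0 : 0 < eps by rewrite /eps; lra.
have fcx : f z @[z --> x] --> f x by apply: fc.
have Hn : \forall t \near x, `|f x - f t| < eps := cvgr_dist_lt _ _ fcx _ e0.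
have [d d0 Hd] := proj1 (nbhs_ballP _ _) (Hn _).
have m1 : Num.min d eps <= d by rewrite ge_min lexx.
have m2 : Num.min d eps <= eps by rewrite ge_min lexx orbT.
apply: (@lt_le_trans _ _ (Num.min d eps)); first by rewrite lt_min d0 e0.
apply: ds_ge; first exact: L_ne.
move=> [z w] Lq; rewrite /epigraph /= in Lq.
have [/forallP Hall | /forallPn [i Hi]] := boolP [forall i : 'I_n, `|x ord0 i - z ord0 i| < d].
  have bz : ball x d z by split => // i j; rewrite (ord1 i) /ball /=; apply: Hall.
  have := Hd z bz; rewrite /= => fxz.
  have := ler_norm (f x - f z); have := edist_ge2 (x, y) (z, w); rewrite /= distrC.
  have := ler_norm (w - y); move: m2 fxz; rewrite /eps; lra.
rewrite -leNgt in Hi.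
apply: (le_trans m1).
have Hs : d ^+ 2 <= sqnorm (x - z).
  rewrite /sqnorm (bigD1 i) //= !mxE.
  have t1 : d ^+ 2 <= (x ord0 i - z ord0 i) ^+ 2.
    by rewrite -[X in _ <= X]real_normK ?num_real // ler_pXn2r ?nnegrE ?(ltW d0) //.
  have t2 : 0 <= \sum_(j < n | j != i) ((x - z) ord0 j) ^+ 2.
    by apply: sumr_ge0 => j _; exact: sqr_ge0.
  lra.
rewrite /Defs.edist /=; apply: sqrt_geB; first exact: ltW.
have := sqr_ge0 (y - w); lra.
Qed.

Lemma phi_cont : continuous (fun y => h y - g y).
Proof.
move=> t; apply/cvgrPdist_lt => e e0.
exists (e / 4); first by rewrite /= divr_gt0.
move=> s /= ts.
have h1 := ds_lip x t s L_ne; have h2 := ds_lip x s t L_ne.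
have g1 := ds_lip x t s K_ne; have g2 := ds_lip x s t K_ne.
rewrite distrC in h2 g2.
rewrite ltr_norml; apply/andP; split; rewrite /h /g; lra.
Qed.

Lemma root_out y : g y = h y -> r < P y.
Proof.
move=> gh; rewrite ltNge; apply/negP => Pr.
have g0 := g_in Pr; rewrite g0 in gh.
have [yf|fy] := ltP y (f x).
  by have := h_pos yf; rewrite -gh ltxx.
have P2 := P_sqr y; have P0 := P_ge0 y; have := fK x; have := fpos x.
nra.
Qed.

Lemma no_two y1 y2 : y1 < y2 -> g y1 = h y1 -> g y2 = h y2 -> False.
Proof.
move=> lt12 e1 e2.
have o1 := root_out e1; have o2 := root_out e2.
have G1 := g_out o1; have G2 := g_out o2.
have Q1 := P_sqr y1; have Q2 := P_sqr y2.
have Hm := h_mono (ltW lt12).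
have P21 : P y2 <= P y1 by move: Hm; rewrite -e1 -e2 G1 G2; lra.
have s21 : y2 ^+ 2 <= y1 ^+ 2.
  have : P y2 ^+ 2 <= P y1 ^+ 2 by rewrite ler_pXn2r ?nnegrE ?P_ge0.
  rewrite Q1 Q2; lra.
have s0 : y1 + y2 <= 0 by nra.
have [lt|eq] := ltrP (y2 ^+ 2) (y1 ^+ 2).
  have K := key lt12 s0.
  rewrite -e1 -e2 G1 G2 in K.
  have : r * P y1 <= r * P y2 by move: K; rewrite !sqrrB Q1 Q2; lra.
  rewrite ler_pM2l // => P12.
  have : P y1 ^+ 2 <= P y2 ^+ 2 by rewrite ler_pXn2r ?nnegrE ?P_ge0.
  rewrite Q1 Q2; lra.
have eqs : y2 ^+ 2 = y1 ^+ 2 by apply/le_anti; rewrite s21 eq.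
have P12 : P y1 = P y2 by rewrite /P eqs.
have y1n : y1 < 0 by nra.
have y2p : y2 = - y1 by nra.
have l13 : y1 < y1 / 2 by lra.
have s13 : y1 + y1 / 2 <= 0 by lra.
have K := key l13 s13.
have m32 : h y2 <= h (y1 / 2) by apply: h_mono; lra.
have h20 := h_ge0 y2.
have h1 : h y1 = h y2 by rewrite -e1 -e2 G1 G2 P12.
rewrite h1 in K.
have : h y2 ^+ 2 <= h (y1 / 2) ^+ 2 by rewrite ler_pXn2r ?nnegrE // (le_trans h20 m32).
nra.
Qed.

Lemma exists_root : exists y, g y = h y.
Proof.
pose y0 : R := - sqnorm x / r.
have sx := sqnorm_ge0 x.
have y00 : y0 <= 0 by rewrite /y0 mulNr oppr_le0 divr_ge0 // ltW.
have ry : r * y0 = - sqnorm x by rewrite /y0 mulrC divfK // lt0r_neq0.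
have fx0 := fpos x.
have phi0 : 0 <= h y0 - g y0.
  have := h_lower y00.
  have [Pr|rP] := leP (P y0) r; first by rewrite g_in //; lra.
  rewrite g_out //.
  have : P y0 <= r - y0.
    apply: sqrt_leB; first by rewrite subr_ge0 (le_trans y00 (ltW r0)).
    have -> : (r - y0) ^+ 2 = r ^+ 2 - 2 * (r * y0) + y0 ^+ 2 by ring.
    rewrite ry; have := sqr_ge0 r; lra.
  lra.
have phi1 : h (f x) - g (f x) < 0.
  rewrite h_zero //.
  have rP : r < P (f x).
    have Q := P_sqr (f x); have := P_ge0 (f x); have := fK x; nra.
  rewrite g_out //; lra.
have le0 : y0 <= f x by lra.
have Hb : Num.min (h y0 - g y0) (h (f x) - g (f x)) <= 0 <= Num.max (h y0 - g y0) (h (f x) - g (f x)).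
  rewrite ge_min le_max; apply/andP; split.
    by apply/orP; right; lra.
  by apply/orP; left; lra.
have [c _ Hc] := @IVT R (fun y => h y - g y) y0 (f x) 0 le0
  (continuous_subspaceT phi_cont) Hb.
by exists c; lra.
Qed.

End Main.

Unset Implicit Arguments.

Theorem lemma2 (R : realType) (n : nat) (r : R) (f : 'rV[R]_n -> R) :
  (1 <= n)%N -> 0 < r -> continuous f -> (forall x, 0 < f x) ->
  (forall x, r ^+ 2 < sqnorm x + f x ^+ 2) ->
  forall x : 'rV[R]_n, exists! y : R,
    dist_set (x, y) (cball0 r) = dist_set (x, y) (epigraph f).
Proof.
move=> _ r0 fc fpos fK x.
have [y Hy] := exists_root x r0 fpos fK.
exists y; split => // y' Hy'.
have [lt|gt|//] := ltgtP y y'.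
  by case: (no_two r0 fc fpos fK lt Hy Hy').
by case: (no_two r0 fc fpos fK gt Hy' Hy).
Qed.
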